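(* Let $x\in J$ and let $\mathcal I=\{I_i\}_{i\in F}$ and $\mathcal L=\{L_j\}_{j\in G}$ be $x$-norming partitions. Then for every $i\in F$ and $j\in G$, either $I_i\subset L_j$, or $L_j\subset I_i$, or $I_i\cap L_j=\emptyset$.
   Context: For a real sequence $x=(x(n))_{n\in\mathbb N}$ let $\|x\|_J=\sup\bigl(\sum_{i=1}^n|\sum_{k\in I_i}x(k)|^2\bigr)^{1/2}$ over all $n$ and all families of pairwise disjoint intervals $I_1,\dots,I_n$ of $\mathbb N$ (intervals: nonempty sets of consecutive positive integers, possibly infinite). $J=\{x:\|x\|_J<\infty\}$; for $x\in J$ and any interval $I$ the series $\sum_{k\in I}x(k)$ converges. $\mathrm{supp}(x)=\{n:x(n)\ne0\}$. A family of intervals $\mathcal I=\{I_i\}_{i\in F}$: $F=\{1,\dots,k\}$ or $F=\mathbb N$, each $I_i$ an interval, $\max I_i<\min I_{i+1}$ whenever $i+1\in F$; $\|x\|_{\mathcal I}=(\sum_{i\in F}|\sum_{k\in I_i}x(k)|^2)^{1/2}$; it is $x$-norming if $\|x\|_{\mathcal I}=\|x\|_J$. For nonempty $L\subset\mathbb N$, $\sup L=\max L$ if finite and $\infty$ otherwise. An $x$-norming partition is an $x$-norming family with $\{\min I_i,\max I_i\}\subset\mathrm{supp}(x)$ for all $i<\sup F$, and, if $F$ is finite, $\min I_i\in\mathrm{supp}(x)$ and $\sup I_i=\sup\mathrm{supp}(x)$ for $i=\sup F$. *)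

(* Defs.v *)
From Stdlib Require Import Reals Lra Lia ClassicalEpsilon.
From Coquelicot Require Import Coquelicot.
Open Scope R_scope.

(* A real sequence x = (x(n))_{n >= 1} is a function nat -> R; the value x 0
   is irrelevant (all intervals consist of positive integers). *)

Definition is_interval (I : nat -> Prop) : Prop :=
  (exists n, I n) /\
  (forall n, I n -> (1 <= n)%nat) /\
  (forall a b c, I a -> I c -> (a <= b)%nat -> (b <= c)%nat -> I b).

Definition isum (x : nat -> R) (I : nat -> Prop) : R :=
  Series (fun k => if excluded_middle_informative (I k) then x k else 0).

Fixpoint rsum (f : nat -> R) (n : nat) : R :=
  match n with O => 0 | S m => rsum f m + f m end.

(* squares of the quantities whose sup defines ||x||_J:
   sum_{i=1}^n |sum_{k in I_i} x(k)|^2 over pairwise disjoint intervals I_1..I_n *)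
Definition J_values (x : nat -> R) (s : R) : Prop :=
  exists (n : nat) (f : nat -> nat -> Prop),
    (forall i, (1 <= i <= n)%nat -> is_interval (f i)) /\
    (forall i j, (1 <= i <= n)%nat -> (1 <= j <= n)%nat -> i <> j ->
       forall k, f i k -> f j k -> False) /\
    s = rsum (fun i => (isum x (f (S i)))^2) n.

(* x in J: the supremum is finite (together with the convergence of the
   series over infinite intervals, which is what gives the sums meaning). *)
Definition in_J (x : nat -> R) : Prop :=
  (forall I, is_interval I ->
     ex_series (fun k => if excluded_middle_informative (I k) then x k else 0)) /\
  (exists M, forall s, J_values x s -> s <= M).

Definition J_norm (x : nat -> R) : R := sqrt (real (Lub_Rbar (J_values x))).

(* Index set F of a family: [Some k] codes F = {1,...,k} (k >= 1),
   [None] codes F = N = {1,2,...}. *)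
Definition in_F (F : option nat) (i : nat) : Prop :=
  (1 <= i)%nat /\ match F with Some k => (i <= k)%nat | None => True end.

Definition is_family (F : option nat) (I : nat -> nat -> Prop) : Prop :=
  match F with Some k => (1 <= k)%nat | None => True end /\
  (forall i, in_F F i -> is_interval (I i)) /\
  (forall i, in_F F i -> in_F F (S i) ->
     forall a b, I i a -> I (S i) b -> (a < b)%nat).

Definition family_norm (x : nat -> R) (F : option nat) (I : nat -> nat -> Prop) : R :=
  match F with
  | Some k => sqrt (rsum (fun i => (isum x (I (S i)))^2) k)
  | None => sqrt (Series (fun i => (isum x (I (S i)))^2))
  end.

Definition norming (x : nat -> R) (F : option nat) (I : nat -> nat -> Prop) : Prop :=
  is_family F I /\ family_norm x F I = J_norm x.

Definition supp (x : nat -> R) (n : nat) : Prop := (1 <= n)%nat /\ x n <> 0.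

Definition is_min (L : nat -> Prop) (m : nat) : Prop := L m /\ forall n, L n -> (m <= n)%nat.
Definition is_max (L : nat -> Prop) (m : nat) : Prop := L m /\ forall n, L n -> (n <= m)%nat.

(* sup L = max L if L is finite (Some m), infinity otherwise (None). *)
Definition is_sup_nat (L : nat -> Prop) (v : option nat) : Prop :=
  match v with
  | Some m => is_max L m
  | None => forall m, exists n, L n /\ (m < n)%nat
  end.

Definition norming_partition (x : nat -> R) (F : option nat) (I : nat -> nat -> Prop) : Prop :=
  norming x F I /\
  (forall i, in_F F i ->
     match F with Some k => (i < k)%nat | None => True end ->
     exists a b, is_min (I i) a /\ is_max (I i) b /\ supp x a /\ supp x b) /\
  (forall k, F = Some k ->
     (exists a, is_min (I k) a /\ supp x a) /\
     (exists v, is_sup_nat (I k) v /\ is_sup_nat (supp x) v)).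

(* Main.v *)
Require Import Defs.
From Stdlib Require Import Reals Lra Lia List Arith ClassicalEpsilon Classical.
From Coquelicot Require Import Coquelicot.
Import ListNotations.
Open Scope R_scope.

Definition ind (x : nat -> R) (P : nat -> Prop) : nat -> R :=
  fun k => if excluded_middle_informative (P k) then x k else 0.

Lemma isum_ind x P : isum x P = Series (ind x P).
Proof. reflexivity. Qed.

Lemma sum_n_R (a : nat -> R) n : sum_n a (S n) = sum_n a n + a (S n).
Proof. rewrite sum_Sn. reflexivity. Qed.

Lemma is_series_fin (a : nat -> R) t :
  (forall k, (t < k)%nat -> a k = 0) -> is_series a (sum_n a t).
Proof.
  intros H. unfold is_series.
  apply filterlim_ext_loc with (fun _ => sum_n a t).
  - exists t. intros n Hn. induction Hn. reflexivity.
    rewrite sum_n_R, (H (S m)) by lia. rewrite Rplus_0_r. exact IHHn.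
  - apply filterlim_const.
Qed.

Lemma ind_ext x P Q : (forall n, P n <-> Q n) -> forall k, ind x P k = ind x Q k.
Proof.
  intros H k. unfold ind.
  destruct (excluded_middle_informative (P k)), (excluded_middle_informative (Q k));
  firstorder.
Qed.

Lemma isum_ext x P Q : (forall n, P n <-> Q n) -> isum x P = isum x Q.
Proof. intros H. unfold isum. apply Series_ext. apply (ind_ext x P Q H). Qed.

Lemma ex_ext x P Q : (forall n, P n <-> Q n) -> ex_series (ind x P) -> ex_series (ind x Q).
Proof. intros H. apply ex_series_ext. apply (ind_ext x P Q H). Qed.

Lemma ind_union x P Q R : (forall n, R n <-> P n \/ Q n) -> (forall n, P n -> Q n -> False) ->
  forall k, ind x R k = ind x P k + ind x Q k.
Proof.
  intros H1 H2 k. unfold ind.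
  destruct (excluded_middle_informative (P k)), (excluded_middle_informative (Q k)),
    (excluded_middle_informative (R k)); firstorder; lra.
Qed.

Lemma ex_union x P Q R : (forall n, R n <-> P n \/ Q n) -> (forall n, P n -> Q n -> False) ->
  ex_series (ind x P) -> ex_series (ind x Q) -> ex_series (ind x R).
Proof.
  intros H1 H2 E1 E2. eapply ex_series_ext.
  2: apply (ex_series_plus _ _ E1 E2).
  intros k. simpl. rewrite (ind_union x P Q R H1 H2). reflexivity.
Qed.

Lemma isum_union x P Q R : (forall n, R n <-> P n \/ Q n) -> (forall n, P n -> Q n -> False) ->
  ex_series (ind x P) -> ex_series (ind x Q) -> isum x R = isum x P + isum x Q.
Proof.
  intros H1 H2 E1 E2. unfold isum.
  rewrite <- Series_plus by assumption. apply Series_ext.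
  apply (ind_union x P Q R H1 H2).
Qed.

Lemma ex_cut_lo x P t : ex_series (ind x (fun n => P n /\ (n <= t)%nat)).
Proof.
  eexists. apply (is_series_fin _ t). intros k Hk. unfold ind.
  destruct excluded_middle_informative as [[_ h]|]; [lia|reflexivity].
Qed.

Lemma isum_cut_lo x P t : isum x (fun n => P n /\ (n <= t)%nat) = sum_n (ind x P) t.
Proof.
  unfold isum. apply is_series_unique.
  replace (sum_n (ind x P) t) with (sum_n (ind x (fun n => P n /\ (n <= t)%nat)) t).
  - apply is_series_fin. intros k Hk. unfold ind.
    destruct excluded_middle_informative as [[_ h]|]; [lia|reflexivity].
  - apply sum_n_ext_loc. intros n Hn. unfold ind.
    destruct (excluded_middle_informative (P n /\ (n <= t)%nat)),
      (excluded_middle_informative (P n)); firstorder.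
Qed.

Lemma ex_cut_hi x P t : ex_series (ind x P) -> ex_series (ind x (fun n => P n /\ (t < n)%nat)).
Proof.
  intros E. eapply ex_series_ext. 2: apply (ex_series_minus _ _ E (ex_cut_lo x P t)).
  intros k. simpl. unfold ind. unfold plus, opp; simpl.
  destruct (excluded_middle_informative (P k /\ (t < k)%nat)) as [[h1 h2]|h];
  destruct (excluded_middle_informative (P k)) as [h3|h3];
  destruct (excluded_middle_informative (P k /\ (k <= t)%nat)) as [[h4 h5]|h4]; try lra;
  try lia; try tauto.
  destruct (le_lt_dec k t). exfalso; apply h4; split; auto. exfalso; apply h; split; auto.
Qed.

Lemma isum_cut x P t : ex_series (ind x P) ->
  isum x P = isum x (fun n => P n /\ (n <= t)%nat) + isum x (fun n => P n /\ (t < n)%nat).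
Proof.
  intros E. apply isum_union.
  - intros n. split; [intros h; destruct (le_lt_dec n t); tauto| tauto].
  - intros n [_ h1] [_ h2]. lia.
  - apply ex_cut_lo.
  - apply ex_cut_hi; assumption.
Qed.

Definition bef (A B : nat -> Prop) := forall a b, A a -> B b -> (a < b)%nat.
Fixpoint ordered (l : list (nat -> Prop)) : Prop :=
  match l with [] => True | A :: l' => List.Forall (bef A) l' /\ ordered l' end.
Definition preint (A : nat -> Prop) :=
  (forall n, A n -> (1 <= n)%nat) /\ (forall a b c, A a -> A c -> (a <= b)%nat -> (b <= c)%nat -> A b).
Fixpoint lsum x (l : list (nat -> Prop)) : R :=
  match l with [] => 0 | A :: l' => (isum x A)^2 + lsum x l' end.
Definition Nx x := real (Lub_Rbar (J_values x)).

Lemma isum_empty x A : (forall n, ~ A n) -> isum x A = 0.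
Proof.
  intros H. unfold isum. apply is_series_unique.
  assert (E : sum_n (ind x A) 0 = 0).
  { rewrite sum_O. unfold ind. destruct excluded_middle_informative; firstorder. }
  assert (H1 : is_series (ind x A) (sum_n (ind x A) 0)).
  { apply is_series_fin. intros k _. unfold ind. destruct excluded_middle_informative; firstorder. }
  rewrite E in H1. exact H1.
Qed.

Lemma J_bound x : in_J x -> (forall s, J_values x s -> s <= Nx x) /\ 0 <= Nx x.
Proof.
  intros [_ [M HM]].
  assert (H0 : J_values x 0).
  { exists 0%nat, (fun _ _ => False). split; [intros; lia|]. split; [intros; lia|]. reflexivity. }
  unfold Nx. destruct (Lub_Rbar_correct (J_values x)) as [Hub Hl].
  assert (HM' : Rbar_le (Lub_Rbar (J_values x)) M).
  { apply Hl. intros s Hs. simpl. apply HM; assumption. }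
  destruct (Lub_Rbar (J_values x)) as [r| |] eqn:E; simpl in *.
  - split; [|apply (Hub 0 H0)]. intros s Hs. apply (Hub s Hs).
  - contradiction.
  - specialize (Hub 0 H0). simpl in Hub. contradiction.
Qed.

Lemma rsum_shift f n : rsum f (S n) = f 0%nat + rsum (fun i => f (S i)) n.
Proof. induction n; simpl in *; lra. Qed.

Lemma rsum_nth x l d : rsum (fun i => (isum x (nth i l d))^2) (length l) = lsum x l.
Proof.
  induction l. reflexivity.
  change (length (a :: l)) with (S (length l)).
  rewrite rsum_shift. change (lsum x (a :: l)) with ((isum x a)^2 + lsum x l).
  rewrite <- IHl. reflexivity.
Qed.

Lemma ordered_nth l d i j : ordered l -> (i < j < length l)%nat -> bef (nth i l d) (nth j l d).
Proof.
  revert i j. induction l as [|A l IH]; intros i j Ho Hij; simpl in *. lia.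
  destruct Ho as [HF Ho]. destruct i, j; try lia.
  - rewrite List.Forall_forall in HF. apply HF. apply nth_In. lia.
  - apply IH; auto. lia.
Qed.

Lemma filt x l : List.Forall preint l -> ordered l ->
  exists l', List.Forall is_interval l' /\ ordered l' /\ lsum x l' = lsum x l /\ incl l' l.
Proof.
  induction l as [|A l IH]; intros HP Ho.
  - exists []. simpl. repeat split; auto. apply incl_refl.
  - inversion HP; subst. destruct Ho as [HF Ho].
    destruct (IH H2 Ho) as [l' [H1' [H2' [H3' H4']]]].
    destruct (classic (exists n, A n)) as [Hne|Hne].
    + exists (A :: l'). split; [|split; [|split]].
      * constructor; auto. destruct H1 as [h1 h2]. split; auto.
      * split; auto. rewrite List.Forall_forall in *. intros B HB. apply HF. apply H4'. auto.
      * simpl. rewrite H3'. reflexivity.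
      * apply incl_cons. left; auto. apply incl_tl; auto.
    + exists l'. split; [|split; [|split]]; auto.
      * simpl. rewrite isum_empty. rewrite H3'. lra. intros n hn. apply Hne. eauto.
      * apply incl_tl; auto.
Qed.

Lemma list_bound x l : in_J x -> List.Forall preint l -> ordered l -> lsum x l <= Nx x.
Proof.
  intros HJ HP Ho. destruct (filt x l HP Ho) as [l' [H1 [H2 [H3 _]]]].
  rewrite <- H3. apply (proj1 (J_bound x HJ)).
  exists (length l'), (fun i => nth (pred i) l' (fun _ => False)).
  split; [|split].
  - intros i Hi. rewrite List.Forall_forall in H1. apply H1. apply nth_In. lia.
  - intros i j Hi Hj Hij k Hk1 Hk2.
    destruct (Nat.lt_total i j) as [h|[h|h]]; try lia.
    + pose proof (ordered_nth l' (fun _ => False) (pred i) (pred j) H2 ltac:(lia)) as B.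
      specialize (B k k Hk1 Hk2). lia.
    + pose proof (ordered_nth l' (fun _ => False) (pred j) (pred i) H2 ltac:(lia)) as B.
      specialize (B k k Hk2 Hk1). lia.
  - rewrite <- (rsum_nth x l' (fun _ => False)). reflexivity.
Qed.
Definition inrange (F : option nat) T := match F with Some k => (T <= k)%nat | None => True end.
Definition pre (I : nat -> nat -> Prop) i := map I (seq 1 (pred i)).
Definition post (I : nat -> nat -> Prop) i T := map I (seq (S i) (T - i)).

Lemma in_F_mid F a b c : in_F F a -> in_F F c -> (a <= b <= c)%nat -> in_F F b.
Proof. unfold in_F. destruct F; intros; intuition lia. Qed.

Lemma in_F_range F T t : inrange F T -> (1 <= t <= T)%nat -> in_F F t.
Proof. unfold in_F, inrange. destruct F; intros; intuition lia. Qed.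

Local Open Scope nat_scope.
Lemma fam_before F I a b : is_family F I -> in_F F a -> in_F F b -> (a < b)%nat -> bef (I a) (I b).
Proof.
  intros [_ [Hint Hord]] Ha Hb Hab.
  assert (forall d, in_F F (a + S d) -> bef (I a) (I (a + S d))).
  { induction d as [|d IHd]; intros Hd.
    - rewrite Nat.add_1_r in *. intros p q hp hq. apply (Hord a Ha Hd); auto.
    - assert (Hm : in_F F (a + S d)) by (apply (in_F_mid F a _ (a + S (S d))); auto; lia).
      specialize (IHd Hm).
      destruct (Hint _ Hm) as [[c Hc] _].
      intros p q hp hq. specialize (IHd p c hp Hc).
      assert (c < q)%nat. { replace (a + S (S d)) with (S (a + S d)) in Hd, hq by lia.
        exact (Hord (a + S d)%nat Hm Hd c q Hc hq). }
      lia. }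
  replace b with (a + S (b - a - 1))%nat by lia. apply H. replace (a + S (b - a - 1))%nat with b by lia. auto.
Qed.

Local Open Scope R_scope.
Lemma before_sub A A' B B' : bef A B -> (forall n, A' n -> A n) -> (forall n, B' n -> B n) -> bef A' B'.
Proof. intros H h1 h2 a b ha hb. apply H; auto. Qed.

Lemma In_pre A I i : In A (pre I i) -> exists k, (1 <= k < i)%nat /\ A = I k.
Proof. unfold pre. intros H. apply in_map_iff in H as [k [h1 h2]]. apply in_seq in h2. exists k. split; [lia|auto]. Qed.

Lemma In_post A I i T : In A (post I i T) -> exists k, (i < k <= T)%nat /\ A = I k.
Proof. unfold post. intros H. apply in_map_iff in H as [k [h1 h2]]. apply in_seq in h2. exists k. split; [lia|auto]. Qed.

Lemma ordered_map I s n : (forall a b, (s <= a)%nat -> (a < b)%nat -> (b < s + n)%nat -> bef (I a) (I b)) ->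
  ordered (map I (seq s n)).
Proof.
  revert s. induction n; intros s H; simpl. auto.
  split.
  - apply List.Forall_forall. intros B HB. apply in_map_iff in HB as [k [h1 h2]]. apply in_seq in h2. subst.
    apply H; lia.
  - apply IHn. intros a b h1 h2 h3. apply H; lia.
Qed.

Lemma ordered_app l1 l2 : ordered l1 -> ordered l2 -> (forall A B, In A l1 -> In B l2 -> bef A B) ->
  ordered (l1 ++ l2).
Proof.
  induction l1 as [|A l1 IH]; intros h1 h2 h3; simpl in *. auto.
  destruct h1 as [hF ho]. split.
  - apply List.Forall_app. split; auto. apply List.Forall_forall. intros B HB. apply h3; auto.
  - apply IH; auto.
Qed.

Lemma lsum_app x l1 l2 : lsum x (l1 ++ l2) = lsum x l1 + lsum x l2.
Proof. induction l1; simpl. lra. rewrite IHl1. lra. Qed.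

Lemma rsum_lsum x I T : rsum (fun t => (isum x (I (S t)))^2) T = lsum x (map I (seq 1 T)).
Proof.
  induction T. reflexivity.
  rewrite seq_S, map_app, lsum_app. cbn [rsum]. rewrite IHT. cbn [map lsum]. replace (1 + T)%nat with (S T) by lia. lra.
Qed.

Lemma lsum_split x I i T : (1 <= i <= T)%nat ->
  rsum (fun t => (isum x (I (S t)))^2) T = lsum x (pre I i) + (isum x (I i))^2 + lsum x (post I i T).
Proof.
  intros H. rewrite rsum_lsum. unfold pre, post.
  replace T with (pred i + S (T - i))%nat at 1 by lia.
  rewrite seq_app, map_app, lsum_app. replace (1 + pred i)%nat with i by lia.
  simpl. lra.
Qed.

Lemma rsum_nonneg f n : (forall i, 0 <= f i) -> 0 <= rsum f n.
Proof. intros H. induction n; simpl. lra. specialize (H n). lra. Qed.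

Lemma sum_n_rsum (a : nat -> R) n : sum_n a n = rsum a (S n).
Proof. induction n. rewrite sum_O. simpl. lra. rewrite sum_n_R, IHn. simpl. lra. Qed.

Lemma fam_ordered F I T : is_family F I -> inrange F T -> ordered (map I (seq 1 T)) /\ List.Forall preint (map I (seq 1 T)).
Proof.
  intros Hf HT. split.
  - apply ordered_map. intros a b h1 h2 h3. apply (fam_before F I); auto.
    apply (in_F_range F T); [auto|lia]. apply (in_F_range F T); [auto|lia].
  - apply List.Forall_forall. intros A HA. apply in_map_iff in HA as [k [<- h]]. apply in_seq in h.
    destruct Hf as [_ [Hint _]]. destruct (Hint k) as [_ [h1 h2]]. apply (in_F_range F T); [auto|lia].
    split; auto.
Qed.

Lemma approx x F I i eps : in_J x -> norming x F I -> in_F F i -> 0 < eps ->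
  exists T, (i <= T)%nat /\ inrange F T /\
    Nx x - eps < lsum x (pre I i) + (isum x (I i))^2 + lsum x (post I i T).
Proof.
  intros HJ [Hf Hn] Hi He. destruct (J_bound x HJ) as [Hb HN0].
  unfold family_norm, J_norm in Hn. fold (Nx x) in Hn.
  destruct F as [k|].
  - exists k. destruct Hi as [Hi1 Hi2]. split; [auto|]. split; [simpl; lia|].
    rewrite <- lsum_split by lia.
    apply sqrt_inj in Hn; auto. lra. apply rsum_nonneg. intros; apply pow2_ge_0.
  - set (a := fun t => (isum x (I (S t)))^2) in *.
    assert (Hp : forall n, sum_n a n <= Nx x).
    { intros n. rewrite sum_n_rsum. unfold a. rewrite rsum_lsum.
      destruct (fam_ordered None I (S n) Hf Logic.I) as [h1 h2]. apply list_bound; auto. }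
    assert (Ha : forall n, 0 <= a n) by (intros; apply pow2_ge_0).
    destruct (ex_finite_lim_seq_incr (sum_n a) (Nx x)) as [l Hl]; auto.
    { intros n. rewrite sum_n_R. specialize (Ha (S n)). simpl. lra. }
    assert (HS : Series a = l) by (apply is_series_unique; exact Hl).
    apply is_lim_seq_spec in Hl.
    assert (Hl0 : 0 <= l).
    { destruct (Rle_lt_dec 0 l) as [h|h]; auto.
      destruct (Hl (mkposreal (-l) ltac:(lra))) as [N0 HN]. specialize (HN N0 (le_n _)).
      simpl in HN. assert (0 <= sum_n a N0). { rewrite sum_n_rsum. apply rsum_nonneg; auto. }
      apply Rabs_def2 in HN. lra. }
    rewrite HS in Hn. apply sqrt_inj in Hn; auto. subst l.
    destruct (Hl (mkposreal eps He)) as [N0 HN].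
    exists (S (Nat.max N0 i)). split; [lia|]. split; [exact Logic.I|].
    specialize (HN (Nat.max N0 i) ltac:(lia)). simpl in HN. apply Rabs_def2 in HN.
    rewrite sum_n_rsum in HN. unfold a in HN. rewrite (lsum_split x I i) in HN.
    lra. destruct Hi; lia.
Qed.
Lemma eps_le a b : (forall eps, 0 < eps -> a <= b + eps) -> a <= b.
Proof. intros H. destruct (Rle_lt_dec a b) as [h|h]; auto. specialize (H ((a - b)/2) ltac:(lra)). lra. Qed.

Lemma in_F_le F i k : in_F F i -> (1 <= k <= i)%nat -> in_F F k.
Proof. unfold in_F. destruct F; intros; intuition lia. Qed.

Lemma fam_preint F I k : is_family F I -> in_F F k -> preint (I k).
Proof. intros [_ [H _]] Hk. destruct (H k Hk) as [_ [h1 h2]]. split; auto. Qed.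

Lemma pre_ok F I i : is_family F I -> in_F F i ->
  ordered (pre I i) /\ List.Forall preint (pre I i) /\
  (forall A, In A (pre I i) -> exists k, (1 <= k < i)%nat /\ in_F F k /\ A = I k).
Proof.
  intros Hf Hi. split; [|split].
  - apply ordered_map. intros a b h1 h2 h3. apply (fam_before F I); auto.
    apply (in_F_le F i); [auto|lia]. apply (in_F_le F i); [auto|lia].
  - apply List.Forall_forall. intros A HA. apply In_pre in HA as [k [h ->]].
    apply (fam_preint F); auto. apply (in_F_le F i); [auto|lia].
  - intros A HA. apply In_pre in HA as [k [h ->]]. exists k. split; auto. split; auto.
    apply (in_F_le F i); [auto|lia].
Qed.

Lemma post_ok F I i T : is_family F I -> inrange F T ->
  ordered (post I i T) /\ List.Forall preint (post I i T) /\
  (forall A, In A (post I i T) -> exists k, (i < k <= T)%nat /\ in_F F k /\ A = I k).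
Proof.
  intros Hf Hi. split; [|split].
  - apply ordered_map. intros a b h1 h2 h3. apply (fam_before F I); auto.
    apply (in_F_range F T); [auto|lia]. apply (in_F_range F T); [auto|lia].
  - apply List.Forall_forall. intros A HA. apply In_post in HA as [k [h ->]].
    apply (fam_preint F); auto. apply (in_F_range F T); [auto|lia].
  - intros A HA. apply In_post in HA as [k [h ->]]. exists k. split; auto. split; auto.
    apply (in_F_range F T); [auto|lia].
Qed.

Lemma build3 l1 Zs l2 : ordered l1 -> ordered Zs -> ordered l2 ->
  (forall A B, In A l1 -> In B Zs -> bef A B) ->
  (forall A B, In A l1 -> In B l2 -> bef A B) ->
  (forall A B, In A Zs -> In B l2 -> bef A B) -> ordered (l1 ++ Zs ++ l2).
Proof.
  intros h1 h2 h3 h4 h5 h6. apply ordered_app; auto.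
  - apply ordered_app; auto.
  - intros A B HA HB. apply in_app_or in HB as [HB|HB]; auto.
Qed.

Lemma Forall3 (l1 Zs l2 : list (nat -> Prop)) : List.Forall preint l1 -> List.Forall preint Zs -> List.Forall preint l2 ->
  List.Forall preint (l1 ++ Zs ++ l2).
Proof. intros. apply List.Forall_app; split; auto. apply List.Forall_app; split; auto. Qed.

Lemma split_le x F I i Zs : in_J x -> norming x F I -> in_F F i ->
  List.Forall preint Zs -> ordered Zs -> (forall Z, In Z Zs -> forall n, Z n -> I i n) ->
  lsum x Zs <= (isum x (I i))^2.
Proof.
  intros HJ Hn Hi HP Ho Hsub. apply eps_le. intros eps He.
  destruct (approx x F I i eps HJ Hn Hi He) as [T [HiT [HT Happ]]].
  destruct Hn as [Hf _].
  destruct (pre_ok F I i Hf Hi) as [o1 [p1 q1]].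
  destruct (post_ok F I i T Hf HT) as [o2 [p2 q2]].
  assert (Hb : lsum x (pre I i ++ Zs ++ post I i T) <= Nx x).
  { apply list_bound; auto. apply Forall3; auto. apply build3; auto.
    - intros A B HA HB. destruct (q1 A HA) as [k [hk [hk' ->]]].
      apply before_sub with (I k) (I i); auto. apply (fam_before F I); auto. lia. apply (Hsub B HB).
    - intros A B HA HB. destruct (q1 A HA) as [k [hk [hk' ->]]].
      destruct (q2 B HB) as [l [hl [hl' ->]]]. apply (fam_before F I); auto. lia.
    - intros A B HA HB. destruct (q2 B HB) as [l [hl [hl' ->]]].
      apply before_sub with (I i) (I l); auto. apply (fam_before F I); auto. lia. apply (Hsub A HA). }
  rewrite !lsum_app in Hb. lra.
Qed.

Lemma cross_le x F I G L i j U B : in_J x -> norming x F I -> norming x G L -> in_F F i -> in_F G j ->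
  preint U -> preint B ->
  (forall k, (1 <= k < i)%nat -> in_F F k -> bef (I k) U) ->
  (forall l, (j < l)%nat -> in_F G l -> bef U (L l)) ->
  (forall l, (1 <= l < j)%nat -> in_F G l -> bef (L l) B) ->
  (forall k, (i < k)%nat -> in_F F k -> bef B (I k)) ->
  (forall k l, (1 <= k < i)%nat -> in_F F k -> (j < l)%nat -> in_F G l -> bef (I k) (L l)) ->
  (forall k l, (1 <= l < j)%nat -> in_F G l -> (i < k)%nat -> in_F F k -> bef (L l) (I k)) ->
  (isum x U)^2 + (isum x B)^2 <= (isum x (I i))^2 + (isum x (L j))^2.
Proof.
  intros HJ HnI HnL Hi Hj PU PB h1 h2 h3 h4 h5 h6. apply eps_le. intros eps He.
  destruct (approx x F I i (eps/2) HJ HnI Hi ltac:(lra)) as [T1 [HiT1 [HT1 Happ1]]].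
  destruct (approx x G L j (eps/2) HJ HnL Hj ltac:(lra)) as [T2 [HiT2 [HT2 Happ2]]].
  destruct HnI as [HfI _]. destruct HnL as [HfL _].
  destruct (pre_ok F I i HfI Hi) as [o1 [p1 q1]].
  destruct (post_ok F I i T1 HfI HT1) as [o2 [p2 q2]].
  destruct (pre_ok G L j HfL Hj) as [o3 [p3 q3]].
  destruct (post_ok G L j T2 HfL HT2) as [o4 [p4 q4]].
  assert (Hb1 : lsum x (pre I i ++ [U] ++ post L j T2) <= Nx x).
  { apply list_bound; auto. apply Forall3; auto. apply build3; auto.
    - simpl. split; auto.
    - intros A B' HA HB. destruct (q1 A HA) as [k [hk [hk' ->]]]. destruct HB as [<-|[]]. auto.
    - intros A B' HA HB. destruct (q1 A HA) as [k [hk [hk' ->]]].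
      destruct (q4 B' HB) as [l [hl [hl' ->]]]. apply h5; auto; lia.
    - intros A B' HA HB. destruct HA as [<-|[]]. destruct (q4 B' HB) as [l [hl [hl' ->]]]. apply h2; auto; lia. }
  assert (Hb2 : lsum x (pre L j ++ [B] ++ post I i T1) <= Nx x).
  { apply list_bound; auto. apply Forall3; auto. apply build3; auto.
    - simpl. split; auto.
    - intros A B' HA HB. destruct (q3 A HA) as [k [hk [hk' ->]]]. destruct HB as [<-|[]]. auto.
    - intros A B' HA HB. destruct (q3 A HA) as [k [hk [hk' ->]]].
      destruct (q2 B' HB) as [l [hl [hl' ->]]]. apply h6; auto; lia.
    - intros A B' HA HB. destruct HA as [<-|[]]. destruct (q2 B' HB) as [l [hl [hl' ->]]]. apply h4; auto; lia. }
  rewrite !lsum_app in Hb1, Hb2. simpl in Hb1, Hb2. lra.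
Qed.
Lemma part_min x F I i : norming_partition x F I -> in_F F i -> exists p, is_min (I i) p /\ supp x p.
Proof.
  intros [_ [H2 H3]] Hi. destruct F as [k|].
  - destruct (Nat.lt_ge_cases i k) as [h|h].
    + destruct (H2 i Hi h) as [a [b [h1 [_ [h3 _]]]]]. eauto.
    + assert (i = k) by (destruct Hi; lia). subst. destruct (H3 k eq_refl) as [[a ha] _]. eauto.
  - destruct (H2 i Hi Logic.I) as [a [b [h1 [_ [h3 _]]]]]. eauto.
Qed.

Lemma part_max x F I i : norming_partition x F I -> in_F F i ->
  (exists q, is_max (I i) q /\ supp x q) \/
  ((forall m, exists n, I i n /\ (m < n)%nat) /\ (forall m, exists n, supp x n /\ (m < n)%nat)).
Proof.
  intros [_ [H2 H3]] Hi. destruct F as [k|].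
  - destruct (Nat.lt_ge_cases i k) as [h|h].
    + destruct (H2 i Hi h) as [a [b [_ [h2 [_ h4]]]]]. left; eauto.
    + assert (i = k) by (destruct Hi; lia). subst. destruct (H3 k eq_refl) as [_ [v [hv1 hv2]]].
      destruct v as [q|]; simpl in *.
      * left. exists q. split; auto. apply hv2.
      * right. auto.
  - destruct (H2 i Hi Logic.I) as [a [b [_ [h2 [_ h4]]]]]. left; eauto.
Qed.

Lemma zero_split x Z e : ex_series (ind x Z) -> isum x Z = 0 -> Z e -> x e <> 0 -> (forall n, Z n -> (1 <= n)%nat) ->
  exists t d, d <> 0 /\ isum x (fun n => Z n /\ (n <= t)%nat) = d /\ isum x (fun n => Z n /\ (t < n)%nat) = - d.
Proof.
  intros E H0 He Hx Hpos.
  assert (K : forall t, isum x (fun n => Z n /\ (t < n)%nat) = - isum x (fun n => Z n /\ (n <= t)%nat)).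
  { intros t. pose proof (isum_cut x Z t E). lra. }
  destruct (Req_dec (sum_n (ind x Z) e) 0) as [h|h].
  - exists (pred e), (- x e). split; [lra|]. rewrite K, isum_cut_lo.
    assert (Hs : sum_n (ind x Z) e = sum_n (ind x Z) (pred e) + ind x Z e).
    { specialize (Hpos e He). destruct e; [lia|]. simpl pred. apply sum_n_R. }
    unfold ind at 3 in Hs. destruct excluded_middle_informative; [|contradiction].
    split; lra.
  - exists e, (sum_n (ind x Z) e). rewrite K, isum_cut_lo. split; auto.
Qed.

Lemma preint_lo Z t : preint Z -> preint (fun n => Z n /\ (n <= t)%nat).
Proof. intros [h1 h2]. split. intros n [hn _]; auto. intros a b c [ha ha'] [hc hc'] hab hbc. split; [apply (h2 a b c); auto|lia]. Qed.
Lemma preint_hi Z t : preint Z -> preint (fun n => Z n /\ (t < n)%nat).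
Proof. intros [h1 h2]. split. intros n [hn _]; auto. intros a b c [ha ha'] [hc hc'] hab hbc. split; [apply (h2 a b c); auto|lia]. Qed.

Lemma F2 X Y : preint X -> preint Y -> List.Forall preint [X; Y].
Proof. intros. constructor; auto. Qed.
Lemma F3 X Y W : preint X -> preint Y -> preint W -> List.Forall preint [X; Y; W].
Proof. intros. constructor; auto. Qed.
Lemma ord2 X Y : bef X Y -> ordered [X; Y].
Proof. intros. simpl. repeat constructor; auto. Qed.
Lemma ord3 X Y W : bef X Y -> bef X W -> bef Y W -> ordered [X; Y; W].
Proof. intros. simpl. repeat constructor; auto. Qed.

Lemma cross x F I G L i j u z w : in_J x -> norming_partition x F I -> norming_partition x G L ->
  in_F F i -> in_F G j -> I i u -> ~ L j u -> I i z -> L j z -> L j w -> ~ I i w ->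
  (u < z)%nat -> (z < w)%nat -> False.
Proof.
  intros HJ HI HL Hi Hj Iu Lu Iz Lz Lw Iw uz zw.
  assert (HfI := proj1 (proj1 HI)). assert (HfL := proj1 (proj1 HL)).
  assert (PI := fam_preint F I i HfI Hi). assert (PL := fam_preint G L j HfL Hj).
  destruct PI as [posI cvI]. destruct PL as [posL cvL].
  assert (EI : ex_series (ind x (I i))) by (apply (proj1 HJ); apply (proj1 (proj2 HfI)); auto).
  assert (EL : ex_series (ind x (L j))) by (apply (proj1 HJ); apply (proj1 (proj2 HfL)); auto).
  assert (g1 : forall n, I i n -> (n < w)%nat).
  { intros n hn. destruct (Nat.lt_ge_cases n w) as [h|h]; auto. exfalso. apply Iw. apply (cvI z w n); auto; lia. }
  assert (g2 : forall n, L j n -> (u < n)%nat).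
  { intros n hn. destruct (Nat.lt_ge_cases u n) as [h|h]; auto. exfalso. apply Lu. apply (cvL n u z); auto; lia. }
  destruct (part_min x F I i HI Hi) as [p [[Ip pmin] sp]].
  destruct (part_min x G L j HL Hj) as [m [[Lm mmin] sm]].
  assert (Hq : exists q, is_max (I i) q).
  { destruct (part_max x F I i HI Hi) as [[q [hq _]]|[h _]]; eauto.
    destruct (h w) as [n [hn1 hn2]]. specialize (g1 n hn1). lia. }
  destruct Hq as [q [Iq qmax]].
  assert (pu := pmin u Iu). assert (um := g2 m Lm). assert (mz := mmin z Lz).
  assert (zq := qmax z Iz). assert (qw := g1 q Iq).
  assert (Ich : forall n, I i n <-> (p <= n <= q)%nat).
  { intros n; split. intros hn; split; [apply pmin|apply qmax]; auto. intros [h1 h2]. apply (cvI p n q); auto. }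
  assert (Lin : forall n, (m <= n <= w)%nat -> L j n). { intros n [h1 h2]. apply (cvL m n w); auto. }
  set (A := fun n => I i n /\ (n <= m - 1)%nat).
  set (Bp := fun n => I i n /\ (m - 1 < n)%nat).
  set (B' := fun n => L j n /\ (n <= q)%nat).
  set (C := fun n => L j n /\ (q < n)%nat).
  set (U := fun n => I i n \/ L j n).
  assert (EA : ex_series (ind x A)) by apply ex_cut_lo.
  assert (EB : ex_series (ind x Bp)) by (apply ex_cut_hi; auto).
  assert (EC : ex_series (ind x C)) by (apply ex_cut_hi; auto).
  assert (hI : isum x (I i) = isum x A + isum x Bp) by (apply isum_cut; auto).
  assert (hL0 : isum x (L j) = isum x B' + isum x C) by (apply isum_cut; auto).
  assert (hB : isum x B' = isum x Bp).
  { apply isum_ext. intros n. unfold B', Bp. rewrite Ich. split.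
    - intros [h1 h2]. pose proof (mmin n h1). lia.
    - intros [h1 h2]. split; [apply Lin|]; lia. }
  assert (hU : isum x U = isum x A + isum x (L j)).
  { apply isum_union; auto.
    - intros n. unfold U, A. rewrite Ich. split.
      + intros [h|h]; [|auto]. destruct (Nat.le_gt_cases n (m - 1)). left; split; [auto|lia].
        right. apply Lin. lia.
      + intros [[h1 h2]|h]; auto.
    - intros n [h1 h2] h3. pose proof (mmin n h3). lia. }
  set (a := isum x A) in *. set (b := isum x Bp) in *. set (c := isum x C) in *.
  assert (PI : preint (I i)) by (split; auto). assert (PL : preint (L j)) by (split; auto).
  assert (HnI := proj1 HI). assert (HnL := proj1 HL).
  assert (L1 : a^2 + b^2 <= (a + b)^2).
  { assert (K : lsum x [A; Bp] <= (isum x (I i))^2).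
    { apply (split_le x F I i [A; Bp] HJ HnI Hi).
    - apply F2; [apply preint_lo|apply preint_hi]; auto.
    - apply ord2. intros s t [_ h1] [_ h2]. lia.
    - intros Z HZ. destruct HZ as [<-|[<-|[]]]; intros n [hn _]; auto. }
    cbn [lsum] in K. rewrite hI in K. fold a b in K. lra. }
  assert (L2 : b^2 + c^2 <= (b + c)^2).
  { assert (K : lsum x [B'; C] <= (isum x (L j))^2).
    { apply (split_le x G L j [B'; C] HJ HnL Hj).
    - apply F2; [apply preint_lo|apply preint_hi]; auto.
    - apply ord2. intros s t [_ h1] [_ h2]. lia.
    - intros Z HZ. destruct HZ as [<-|[<-|[]]]; intros n [hn _]; auto. }
    cbn [lsum] in K. rewrite hL0, hB in K. fold c in K. lra. }
  assert (L3 : (a + b + c)^2 + b^2 <= (a + b)^2 + (b + c)^2).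
  { replace (a + b + c) with (isum x U) by lra. rewrite <- hI.
    replace (b + c) with (isum x (L j)) by lra.
    apply (cross_le x F I G L i j U Bp HJ HnI HnL Hi Hj).
    - split. intros n [h|h]; auto. intros a0 b0 c0 ha hc h1 h2. unfold U in *.
      rewrite Ich in *. destruct ha as [ha|ha]; destruct hc as [hc|hc].
      + left. lia.
      + destruct (Nat.le_gt_cases b0 q). left; lia. right. pose proof (mmin c0 hc). apply (cvL m b0 c0); auto; lia.
      + pose proof (mmin a0 ha). right. apply Lin. lia.
      + right. apply (cvL a0 b0 c0); auto.
    - apply preint_hi; auto.
    - intros k hk hk'. intros a0 b0 ha hb. destruct hb as [hb|hb].
      + apply (fam_before F I k i HfI hk' Hi); auto. lia.
      + pose proof (fam_before F I k i HfI hk' Hi ltac:(lia) a0 u ha Iu). pose proof (g2 b0 hb). lia.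
    - intros l hl hl'. intros a0 b0 ha hb. destruct ha as [ha|ha].
      + pose proof (fam_before G L j l HfL Hj hl' hl w b0 Lw hb). pose proof (g1 a0 ha). lia.
      + apply (fam_before G L j l HfL Hj hl' hl); auto.
    - intros l hl hl'. intros a0 b0 ha [hb hb']. pose proof (mmin b0). unfold Bp in *.
      assert (L j b0) by (apply Lin; rewrite Ich in hb; lia).
      apply (fam_before G L l j HfL hl' Hj ltac:(lia)); auto.
    - intros k hk hk'. intros a0 b0 [ha _] hb. apply (fam_before F I i k HfI Hi hk' hk); auto.
    - intros k l hk hk' hl hl' a0 b0 ha hb.
      pose proof (fam_before F I k i HfI hk' Hi ltac:(lia) a0 u ha Iu).
      pose proof (fam_before G L j l HfL Hj hl' hl z b0 Lz hb). lia.
    - intros k l hl hl' hk hk' a0 b0 ha hb.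
      pose proof (fam_before G L l j HfL hl' Hj ltac:(lia) a0 z ha Lz).
      pose proof (fam_before F I i k HfI Hi hk' hk z b0 Iz hb). lia. }
  assert (L4 : b <> 0).
  { intros hb0.
    assert (Bm : Bp m) by (unfold Bp; rewrite Ich; lia).
    destruct (zero_split x Bp m EB hb0 Bm (proj2 sm)) as [t [d [hd [h1 h2]]]].
    { intros n [hn _]; auto. }
    assert (K : lsum x [A; (fun n => Bp n /\ (n <= t)%nat); (fun n => Bp n /\ (t < n)%nat)] <= (isum x (I i))^2).
    { apply (split_le x F I i _ HJ HnI Hi).
      - apply F3; repeat first [apply preint_lo | apply preint_hi | auto].
      - apply ord3; intros s0 t0 h3 h4; unfold A, Bp in *; simpl in *; lia.
      - intros Z HZ. destruct HZ as [<-|[<-|[<-|[]]]]; intros n hn; unfold A, Bp in *; tauto. }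
    cbn [lsum] in K. rewrite h1, h2, hI in K. fold a b in K. rewrite hb0 in K. nra. }
  assert (L5 : a <> 0).
  { intros ha0.
    assert (Ap : A p) by (unfold A; rewrite Ich; lia).
    destruct (zero_split x A p EA ha0 Ap (proj2 sp)) as [t [d [hd [h1 h2]]]].
    { intros n [hn _]; auto. }
    assert (K : lsum x [(fun n => A n /\ (n <= t)%nat); (fun n => A n /\ (t < n)%nat); Bp] <= (isum x (I i))^2).
    { apply (split_le x F I i _ HJ HnI Hi).
      - apply F3; repeat first [apply preint_lo | apply preint_hi | auto].
      - apply ord3; intros s0 t0 h3 h4; unfold A, Bp in *; simpl in *; lia.
      - intros Z HZ. destruct HZ as [<-|[<-|[<-|[]]]]; intros n hn; unfold A, Bp in *; tauto. }
    cbn [lsum] in K. rewrite h1, h2, hI in K. fold a b in K. rewrite ha0 in K. nra. }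
  assert (L6 : c <> 0).
  { intros hc0.
    assert (He : exists e, C e /\ x e <> 0).
    { destruct (part_max x G L j HL Hj) as [[r [[Lr rmax] sr]]|[h1 h2]].
      - exists r. split; [|apply sr]. split; auto. pose proof (rmax w Lw). lia.
      - destruct (h2 w) as [n [sn wn]]. destruct (h1 n) as [n' [Ln' nn']].
        exists n. split; [|apply sn]. split; [apply (cvL w n n'); auto; lia|lia]. }
    destruct He as [e [Ce xe]].
    destruct (zero_split x C e EC hc0 Ce xe) as [t [d [hd [h1 h2]]]].
    { intros n [hn _]; auto. }
    assert (K : lsum x [B'; (fun n => C n /\ (n <= t)%nat); (fun n => C n /\ (t < n)%nat)] <= (isum x (L j))^2).
    { apply (split_le x G L j _ HJ HnL Hj).
      - apply F3; repeat first [apply preint_lo | apply preint_hi | auto].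
      - apply ord3; intros s0 t0 h3 h4; unfold B', C in *; simpl in *; lia.
      - intros Z HZ. destruct HZ as [<-|[<-|[<-|[]]]]; intros n hn; unfold B', C in *; tauto. }
    cbn [lsum] in K. rewrite h1, h2, hL0, hB in K. fold c in K. rewrite hc0 in K. nra. }
  assert (0 < b^2) by (apply pow2_gt_0; auto).
  nra.
Qed.
Theorem corollary3p9 (x : nat -> R) (F : option nat) (I : nat -> nat -> Prop)
  (G : option nat) (L : nat -> nat -> Prop) :
  in_J x -> norming_partition x F I -> norming_partition x G L ->
  forall i j, in_F F i -> in_F G j ->
    (forall n, I i n -> L j n) \/ (forall n, L j n -> I i n) \/
    (forall n, I i n -> L j n -> False).
Proof.
  intros HJ HI HL i j Hi Hj.
  destruct (classic (forall n, I i n -> L j n)) as [h1|h1]; [left; auto|].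
  destruct (classic (forall n, L j n -> I i n)) as [h2|h2]; [right; left; auto|].
  right; right. intros z Iz Lz.
  apply not_all_ex_not in h1 as [u hu]. apply imply_to_and in hu as [Iu Lu].
  apply not_all_ex_not in h2 as [w hw]. apply imply_to_and in hw as [Lw Iw].
  assert (HfI := proj1 (proj1 HI)). assert (HfL := proj1 (proj1 HL)).
  destruct (fam_preint F I i HfI Hi) as [_ cvI].
  destruct (fam_preint G L j HfL Hj) as [_ cvL].
  assert (u <> z) by (intro; subst; contradiction).
  assert (w <> z) by (intro; subst; contradiction).
  destruct (Nat.lt_gt_cases u z) as [[uz|uz] _]; [auto| |].
  - destruct (Nat.lt_gt_cases w z) as [[wz|wz] _]; [auto| |].
    + exfalso. destruct (Nat.lt_ge_cases u w).
      * apply Iw. apply (cvI u w z); auto; lia.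
      * apply Lu. apply (cvL w u z); auto; lia.
    + exact (cross x F I G L i j u z w HJ HI HL Hi Hj Iu Lu Iz Lz Lw Iw uz wz).
  - destruct (Nat.lt_gt_cases w z) as [[wz|wz] _]; [auto| |].
    + exact (cross x G L F I j i w z u HJ HL HI Hj Hi Lw Iw Lz Iz Iu Lu wz uz).
    + exfalso. destruct (Nat.lt_ge_cases u w).
      * apply Lu. apply (cvL z u w); auto; lia.
      * apply Iw. apply (cvI z w u); auto; lia.
Qed.
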